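(* Let $q$ be a prime power, $n\geq 1$, and $c\in\mathbb{F}_q\setminus\{1\}$. Let $f_1,\ldots,f_n:\mathbb{F}_q\to\mathbb{F}_q$ be perfect $c$-nonlinear functions. Let $\{\beta_1,\ldots,\beta_n\}$ be a basis of $\mathbb{F}_{q^n}$ over $\mathbb{F}_q$, let $A$ be the $n\times n$ matrix with $(i,j)$ entry $\beta_i^{q^{j-1}}$, write $A^{-1}=(a_{i,j})_{i,j}$, and for $1\leq k\leq n$ let $L_k(x)=\sum_{i=1}^n a_{i,k}x^{q^{i-1}}$. Then $F:\mathbb{F}_{q^n}\to\mathbb{F}_{q^n}$, $F(x)=\sum_{k=1}^n\beta_k f_k(L_k(x))$, is perfect $c$-nonlinear.
   Context: For a finite field $K$, a function $h:K\to K$ and $c\in K$, let ${}_c\Delta_h(a,b)=\#\{x\in K: h(x+a)-ch(x)=b\}$ and the $c$-differential uniformity is $\delta_{h,c}=\max\{{}_c\Delta_h(a,b): a,b\in K,\ a\neq 0\text{ if } c=1\}$. $h$ is perfect $c$-nonlinear (PcN) if $\delta_{h,c}=1$. *)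

(* Defs.v *)
From HB Require Import structures.
From mathcomp Require Import all_boot all_order all_algebra all_fingroup all_field.
Set Implicit Arguments. Unset Strict Implicit. Unset Printing Implicit Defensive.
Import GRing.Theory.
Local Open Scope ring_scope.

Definition cDelta (T : finFieldType) (h : T -> T) (c a b : T) : nat :=
  #|[set x : T | h (x + a) - c * h x == b]|.

Definition cdiff_unif (T : finFieldType) (h : T -> T) (c : T) : nat :=
  \max_(ab : T * T | (c != 1) || (ab.1 != 0)) cDelta h c ab.1 ab.2.

Definition PcN (T : finFieldType) (h : T -> T) (c : T) : Prop :=
  cdiff_unif h c = 1%N.

(* The identification of F_q (= K) with its image K%:A inside the extension:
   toK y is the unique z in K with z%:A = y when y lies in the image of K
   (and 0 otherwise). *)
Definition toK (K : finFieldType) (L : fieldExtType K) (y : L) : K :=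
  odflt 0 [pick z : K | z%:A == y].

(* Main.v *)
Require Import Defs.
From HB Require Import structures.
From mathcomp Require Import all_boot all_order all_algebra all_fingroup all_field.
Import GRing.Theory.
Local Open Scope ring_scope.

Section Helpers.
Variables (K : finFieldType) (L0 : fieldExtType K).
Notation L := (finvect_type L0).

Lemma frobD (x y : L) : (x + y) ^+ #|K| = x ^+ #|K| + y ^+ #|K|.
Proof.
have [p pp pK] := finPcharP K.
have hc : #|K| = (p ^ logn p #|K|)%N by exact: (card_pprimeChar pK).
apply: exprDn_pchar; rewrite hc pnatX pnatE //.
by apply/orP; left; rewrite (pchar_lalg L p).
Qed.

Lemma frobDn j (x y : L) : (x + y) ^+ (#|K| ^ j) = x ^+ (#|K| ^ j) + y ^+ (#|K| ^ j).
Proof.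
elim: j => [|j IH]; first by rewrite !expn0 !expr1.
by rewrite expnSr !exprM IH frobD.
Qed.

Lemma frob_alg j (z : K) : (z%:A : L) ^+ (#|K| ^ j) = z%:A.
Proof.
elim: j => [|j IH]; first by rewrite expn0 expr1.
by rewrite expnSr exprM IH -in_algE -rmorphXn expf_card.
Qed.

Lemma frob_sum n j (c : 'I_n -> K) (b : 'I_n -> L) :
  (\sum_i c i *: b i) ^+ (#|K| ^ j) = \sum_i c i *: (b i) ^+ (#|K| ^ j).
Proof.
elim/big_rec2: _ => [|i u v _ <-].
  by rewrite expr0n expn_eq0 (negbTE (lt0n_neq0 (ltnW (finNzRing_gt1 K)))).
rewrite frobDn; congr (_ + _).
by rewrite -mulr_algl exprMn frob_alg mulr_algl.
Qed.

Lemma moore_unit n (beta : n.-tuple L) : (0 < n)%N -> basis_of fullv beta ->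
  (\matrix_(i < n, j < n) (tnth beta i) ^+ (#|K| ^ j)) \in unitmx.
Proof.
move=> hn hb; set A := \matrix_(i < n, j < n) _.
have hq1 := finNzRing_gt1 K.
rewrite unitmxE unitfE -det_tr; apply/negP => /det0P [v nzv hv].
have hvi i : \sum_j v 0 j * (tnth beta i) ^+ (#|K| ^ j) = 0.
  transitivity ((v *m A^T) 0 i); last by rewrite hv mxE.
  by rewrite mxE; apply: eq_bigr => j _; rewrite mxE /A mxE.
pose P : {poly L} := \sum_(j < n) v 0 j *: 'X^(#|K| ^ j).
have hP x : P.[x] = \sum_j v 0 j * x ^+ (#|K| ^ j).
  by rewrite horner_sum; apply: eq_bigr => j _; rewrite hornerZ hornerXn.
have hroot x : P.[x] = 0.
  rewrite hP (coord_basis hb (memvf x)).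
  under eq_bigr do rewrite frob_sum mulr_sumr.
  rewrite exchange_big /=; apply: big1 => i _.
  under eq_bigr do rewrite -scalerAr.
  by rewrite -scaler_sumr -(tnth_nth 0) hvi scaler0.
have nzP : P != 0.
  have [j0 hj0] : exists j0, v 0 j0 != 0.
    apply/existsP; apply: contraR nzv => /existsPn h; apply/eqP/rowP => j.
    by rewrite mxE; apply/eqP; have := h j; rewrite negbK.
  apply/eqP => /(congr1 (fun p : {poly L} => p`_(#|K| ^ j0))).
  rewrite coef0 coef_sum (bigD1 j0) //= coefZ coefXn eqxx mulr1 big1 ?addr0.
    by move=> h; move: hj0; rewrite h eqxx.
  move=> j hj; have hj' : (nat_of_ord j0 == nat_of_ord j) = false by apply/negbTE; rewrite eq_sym; exact: hj.
  by rewrite coefZ coefXn eqn_exp2l // hj' mulr0.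
have szP : (size P <= (#|K| ^ n.-1).+1)%N.
  rewrite /P; elim/big_ind: _ => [|p1 p2 h1 h2|j _].
  - by rewrite size_poly0.
  - by rewrite (leq_trans (size_polyD _ _)) // geq_max h1 h2.
  - rewrite (leq_trans (size_scale_leq _ _)) // size_polyXn ltnS leq_exp2l //.
    by rewrite -ltnS prednK.
have := max_poly_roots nzP (rs := enum L).
rewrite enum_uniq -cardE.
have -> : all (root P) (enum L) by apply/allP => x _; rewrite /root hroot.
move=> /(_ isT isT) hlt.
have hcard : #|L| = (#|K| ^ n)%N.
  by rewrite -(size_basis hb) -card_vspace; apply: eq_card => x; rewrite memvf.
move: (leq_trans hlt szP); rewrite hcard ltnS leq_exp2l //.
by rewrite -ltnS prednK // ltnn.
Qed.

End Helpers.

Lemma pcn_le1 (T : finFieldType) (h : T -> T) c : c != 1 -> PcN h c ->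
  forall a b, (cDelta h c a b <= 1)%N.
Proof.
move=> hc hP a b; rewrite -hP /cdiff_unif.
exact: (@leq_bigmax_cond _ (fun ab : T * T => (c != 1) || (ab.1 != 0))
          (fun ab => cDelta h c ab.1 ab.2) (a, b) (introT orP (or_introl hc))).
Qed.

Theorem corollary3p2 (K : finFieldType) (L0 : fieldExtType K) (n : nat)
  (hn : (1 <= n)%N) (c : K) (hc : c != 1)
  (f : 'I_n -> K -> K) (hf : forall k, PcN (f k) c)
  (beta : n.-tuple (finvect_type L0))
  (hbasis : basis_of fullv beta) :
  let q := #|K| in
  let A : 'M[finvect_type L0]_n := \matrix_(i < n, j < n) (tnth beta i) ^+ (q ^ j) in
  let a := invmx A in
  let Lk (k : 'I_n) (x : finvect_type L0) := \sum_(i < n) a i k * x ^+ (q ^ i) in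
  let F (x : finvect_type L0) := \sum_(k < n) tnth beta k * (f k (toK (Lk k x)))%:A in
  PcN F c%:A.
Proof.
move=> q A a Lk F.
have hA : A \in unitmx := @moore_unit K L0 n beta hn hbasis.
have hfree : free beta := basis_free hbasis.
have hx x : x = \sum_i coord beta i x *: tnth beta i.
  rewrite {1}(coord_basis hbasis (memvf x)).
  by apply: eq_bigr => i _; rewrite -(tnth_nth 0).
have hAa i k : \sum_j A i j * a j k = (i == k)%:R.
  have := congr1 (fun M : 'M[finvect_type L0]_n => M i k) (mulmxV hA).
  by rewrite [LHS]mxE [RHS]mxE.
have hLk k x : Lk k x = (coord beta k x)%:A.
  rewrite /Lk.
  transitivity (\sum_j a j k * \sum_i coord beta i x *: A i j).
    apply: eq_bigr => j _; congr (_ * _).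
    rewrite {1}(hx x) frob_sum; apply: eq_bigr => i _.
    by rewrite /A mxE.
  under eq_bigr do rewrite mulr_sumr.
  rewrite exchange_big /=.
  under eq_bigr => i _ do (under eq_bigr do rewrite -scalerAr mulrC; rewrite -scaler_sumr hAa).
  rewrite (bigD1 k) //= eqxx big1 ?addr0 // => i hik.
  by rewrite (negbTE hik) scaler0.
have toKE z : toK (z%:A : finvect_type L0) = z.
  rewrite /toK; case: pickP => [w /eqP h | h] /=.
    by apply: (fmorph_inj (GRing.in_alg (finvect_type L0))); exact: h.
  by have := h z; rewrite eqxx.
have hF x : F x = \sum_k f k (coord beta k x) *: beta`_k.
  rewrite /F; apply: eq_bigr => k _.
  by rewrite hLk toKE mulr_algr (tnth_nth 0).
have hcK x k : coord beta k (F x) = f k (coord beta k x).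
  by rewrite hF coord_sum_free.
have hcD x aa k : coord beta k (F (x + aa) - c%:A * F x)
    = f k (coord beta k x + coord beta k aa) - c * f k (coord beta k x).
  by rewrite linearB /= mulr_algl linearZ /= !hcK linearD.
have hc' : c%:A != 1 :> finvect_type L0.
  by rewrite -in_algE fmorph_eq1.
have hle aa bb : (cDelta F c%:A aa bb <= 1)%N.
  apply/card_le1_eqP => x y; rewrite !inE => /eqP hx' /eqP hy'.
  rewrite (hx x) (hx y); apply: eq_bigr => k _; congr (_ *: _).
  have := @pcn_le1 K (f k) c hc (hf k) (coord beta k aa) (coord beta k bb).
  move/card_le1_eqP; apply; rewrite inE -hcD ?hx' ?hy' //.
rewrite /PcN /cdiff_unif; apply/eqP; rewrite eqn_leq; apply/andP; split.
  by apply/bigmax_leqP => ab _; apply: hle.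
apply: leq_trans (@leq_bigmax_cond _
         (fun ab : finvect_type L0 * finvect_type L0 => (c%:A != 1) || (ab.1 != 0))
         (fun ab : _ * _ => cDelta F c%:A ab.1 ab.2)
         (0, F (0 + 0) - c%:A * F 0) _); last by rewrite hc'.
rewrite /cDelta card_gt0; apply/set0Pn; exists 0; by rewrite inE.
Qed.
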